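(* Let $(H,d)$ be an Hadamard space, i.e. a complete CAT(0) space. Then $\operatorname{Curv} H\leq 0$.
   Context: A CAT(0) space is a geodesic metric space $(X,d)$ such that for every $z\in X$, every geodesic $\gamma\colon[0,1]\to X$ (i.e. $d(\gamma(s),\gamma(t))=d(\gamma(0),\gamma(1))|s-t|$) and every $t\in[0,1]$: $d(z,\gamma(t))^2\le (1-t)d(z,\gamma(0))^2+t\,d(z,\gamma(1))^2-t(1-t)d(\gamma(0),\gamma(1))^2$. For a metric space $(X,d)$, a triangle is a triple $(a_1,a_2,a_3)$ of points of $X$; a comparison triangle is a triple $(\bar a_1,\bar a_2,\bar a_3)$ in the Euclidean plane $\mathbb{R}^2$ with $\|\bar a_i-\bar a_j\|=d(a_i,a_j)$ for all $i,j$ (unique up to isometry). The circumradius of the triangle is $r(a_1,a_2,a_3)=\inf_{x\in X}\max_{i=1,2,3}d(x,a_i)$, and $r(\bar a_1,\bar a_2,\bar a_3)=\min_{x\in\mathbb{R}^2}\max_{i}\|x-\bar a_i\|$. We write $\operatorname{Curv} X\le 0$ if for every triangle $(a_1,a_2,a_3)$ in $X$ one has $r(a_1,a_2,a_3)\le r(\bar a_1,\bar a_2,\bar a_3)$ for a comparison triangle $(\bar a_1,\bar a_2,\bar a_3)$. *)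

(* Defs.v *)
From mathcomp Require Import all_boot all_order all_algebra.
From mathcomp Require Import boolp classical_sets reals.
Set Implicit Arguments. Unset Strict Implicit. Unset Printing Implicit Defensive.
Import Order.TTheory GRing.Theory Num.Theory.
Local Open Scope ring_scope.
Local Open Scope classical_set_scope.

Section Defs.
Variable R : realType.

Definition is_metric (X : Type) (d : X -> X -> R) : Prop :=
  (forall x y, 0 <= d x y) /\
  (forall x y, d x y = 0 <-> x = y) /\
  (forall x y, d x y = d y x) /\
  (forall x y z, d x z <= d x y + d y z).

Definition is_geodesic (X : Type) (d : X -> X -> R) (gamma : R -> X) : Prop :=
  forall s t, 0 <= s <= 1 -> 0 <= t <= 1 ->
    d (gamma s) (gamma t) = d (gamma 0) (gamma 1) * `|s - t|.

Definition geodesic_space (X : Type) (d : X -> X -> R) : Prop :=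
  is_metric d /\
  forall x y, exists gamma : R -> X,
    is_geodesic d gamma /\ gamma 0 = x /\ gamma 1 = y.

Definition CAT0 (X : Type) (d : X -> X -> R) : Prop :=
  geodesic_space d /\
  forall (z : X) (gamma : R -> X), is_geodesic d gamma ->
    forall t, 0 <= t <= 1 ->
      d z (gamma t) ^+ 2 <=
        (1 - t) * d z (gamma 0) ^+ 2 + t * d z (gamma 1) ^+ 2
        - t * (1 - t) * d (gamma 0) (gamma 1) ^+ 2.

Definition complete_metric (X : Type) (d : X -> X -> R) : Prop :=
  forall u : nat -> X,
    (forall e : R, 0 < e -> exists N : nat, forall m n : nat,
        (N <= m)%N -> (N <= n)%N -> d (u m) (u n) < e) ->
    exists l : X, forall e : R, 0 < e -> exists N : nat, forall n : nat,
        (N <= n)%N -> d (u n) l < e.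

Definition Hadamard (X : Type) (d : X -> X -> R) : Prop :=
  CAT0 d /\ complete_metric d.

Definition max3 (a b c : R) : R := Num.max a (Num.max b c).

Definition circumradius (X : Type) (d : X -> X -> R) (a1 a2 a3 : X) : R :=
  inf [set max3 (d x a1) (d x a2) (d x a3) | x in [set: X]].

Definition eucl (p q : R * R) : R :=
  Num.sqrt ((p.1 - q.1) ^+ 2 + (p.2 - q.2) ^+ 2).

Definition circumradius2 (b1 b2 b3 : R * R) : R := circumradius eucl b1 b2 b3.

Definition curv_nonpos (X : Type) (d : X -> X -> R) : Prop :=
  forall (a1 a2 a3 : X) (b1 b2 b3 : R * R),
    eucl b1 b2 = d a1 a2 -> eucl b1 b3 = d a1 a3 -> eucl b2 b3 = d a2 a3 ->
    circumradius d a1 a2 a3 <= circumradius2 b1 b2 b3.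

End Defs.

(* Main.v *)
Require Import Defs.
From mathcomp Require Import all_boot all_order all_algebra.
From mathcomp Require Import boolp classical_sets reals.
From mathcomp Require Import ring lra.
Set Implicit Arguments. Unset Strict Implicit. Unset Printing Implicit Defensive.
Import Order.TTheory GRing.Theory Num.Theory.
Local Open Scope ring_scope.
Local Open Scope classical_set_scope.

Section Minimax.
Variable R : realType.

Lemma claimA (T : Type) (f g : T -> R) (a0 : R) :
  (forall x y t, 0 <= t <= 1 -> exists z,
      f z <= (1 - t) * f x + t * f y /\ g z <= (1 - t) * g x + t * g y) ->
  (forall mu, 0 <= mu <= 1 -> exists x, mu * f x + (1 - mu) * g x < a0) ->
  exists x, f x <= a0 /\ g x <= a0.
Proof.
move=> conv hyp; apply: contrapT => nH.
have nH' : forall x, f x <= a0 -> a0 < g x.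
  move=> x hf; rewrite ltNge; apply/negP => hg; apply: nH; exists x; split.
  exact: hf. exact: hg.
have [y0 hy0] := hyp 1 ltac:(lra).
have fy0 : f y0 < a0 by lra.
have key : forall x y, a0 < f x -> f y < a0 ->
    (a0 - g x) / (f x - a0) <= (g y - a0) / (a0 - f y).
  move=> x y hx hy.
  pose A := f x - a0; pose B := a0 - f y.
  have hA : 0 < A by rewrite /A; lra.
  have hB : 0 < B by rewrite /B; lra.
  have hAB : 0 < A + B by lra.
  pose t := B / (A + B).
  have ht1 : 1 - t = A / (A + B).
    by rewrite /t; field; lra.
  have ht : 0 <= t <= 1.
    rewrite /t; apply/andP; split; first by apply: divr_ge0; lra.
    by rewrite ler_pdivrMr // mul1r; lra.
  have [z [hfz hgz]] := conv y x t ht.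
  have fz : f z <= a0.
    apply: (le_trans hfz); rewrite ht1 /t.
    have -> : A / (A + B) * f y + B / (A + B) * f x = (A * f y + B * f x) / (A + B).
      by field; lra.
    rewrite ler_pdivrMr //; rewrite /A /B; lra.
  have gz := nH' z fz.
  have : a0 < (A * g y + B * g x) / (A + B).
    apply: (lt_le_trans gz); apply: (le_trans hgz); rewrite ht1 /t.
    have -> : A / (A + B) * g y + B / (A + B) * g x = (A * g y + B * g x) / (A + B).
      by field; lra.
    by [].
  rewrite ltr_pdivlMr // => hh.
  rewrite ler_pdivrMr // mulrAC ler_pdivlMr //.
  rewrite /A /B in hh hA hB *; nra.
pose S := [set l | exists2 x, a0 < f x & l = (a0 - g x) / (f x - a0)] `|` [set 0].
have ubS : forall y, f y < a0 -> ubound S ((g y - a0) / (a0 - f y)).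
  move=> y hy l [[x hx ->]|->]; first exact: key.
  apply: divr_ge0; last by lra.
  have := nH' y (ltW hy); lra.
have hS : has_ubound S by exists ((g y0 - a0) / (a0 - f y0)); exact: ubS.
pose k := sup S.
have k0 : 0 <= k by apply: ub_le_sup => //; right.
have kall : forall x, k * f x + g x >= (1 + k) * a0.
  move=> x; have [hx|hx|hx] := ltgtP a0 (f x).
  - have : (a0 - g x) / (f x - a0) <= k by apply: ub_le_sup => //; left; exists x.
    rewrite ler_pdivrMr; last by lra.
    nra.
  - have : k <= (g x - a0) / (a0 - f x).
      apply: ge_sup; first by exists 0; right.
      exact: ubS.
    rewrite ler_pdivlMr; last by lra.
    nra.
  - have := nH' x (ltac:(rewrite -hx; exact: lexx)); rewrite -hx; nra.
have [x hx] := hyp (k / (1 + k)) ltac:(apply/andP; split;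
   [apply: divr_ge0; lra | rewrite ler_pdivrMr; lra]).
have := kall x.
have e1 : 1 - k / (1 + k) = 1 / (1 + k) by field; lra.
rewrite e1 in hx.
have : k * f x + g x < (1 + k) * a0.
  have -> : k * f x + g x = (k / (1 + k) * f x + 1 / (1 + k) * g x) * (1 + k).
    by field; lra.
  by rewrite mulrC ltr_pM2l //; lra.
lra.
Qed.

Lemma claim3 (T : Type) (f1 f2 f3 : T -> R) (V1 V2 : R) : V1 < V2 ->
  (forall x y t, 0 <= t <= 1 -> exists z,
      [/\ f1 z <= (1 - t) * f1 x + t * f1 y, f2 z <= (1 - t) * f2 x + t * f2 y
        & f3 z <= (1 - t) * f3 x + t * f3 y]) ->
  (forall l1 l2 l3, 0 <= l1 -> 0 <= l2 -> 0 <= l3 -> l1 + l2 + l3 = 1 ->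
      exists x, l1 * f1 x + l2 * f2 x + l3 * f3 x < V1) ->
  exists x, [/\ f1 x <= V2, f2 x <= V2 & f3 x <= V2].
Proof.
move=> V12 conv hyp.
have [x [h1 h23]] : exists x, f1 x <= V2 /\ Num.max (f2 x) (f3 x) <= V2.
  apply: claimA.
  - move=> x y t ht; have [z [z1 z2 z3]] := conv x y t ht; exists z; split => //.
    have m2x : f2 x <= Num.max (f2 x) (f3 x) by rewrite le_max lexx.
    have m3x : f3 x <= Num.max (f2 x) (f3 x) by rewrite le_max lexx orbT.
    have m2y : f2 y <= Num.max (f2 y) (f3 y) by rewrite le_max lexx.
    have m3y : f3 y <= Num.max (f2 y) (f3 y) by rewrite le_max lexx orbT.
    rewrite ge_max; apply/andP; split; nra.
  - move=> mu hmu.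
    have [x [hF hG]] : exists x, mu * f1 x + (1 - mu) * f2 x <= V1 /\
                                 mu * f1 x + (1 - mu) * f3 x <= V1.
      apply: claimA.
      + move=> x y t ht; have [z [z1 z2 z3]] := conv x y t ht; exists z; split; nra.
      + move=> nu hnu.
        have [x hx] := hyp mu ((1 - mu) * nu) ((1 - mu) * (1 - nu))
          ltac:(lra) ltac:(nra) ltac:(nra) ltac:(ring).
        exists x; nra.
    exists x; have [h|h] := leP (f2 x) (f3 x).
    + have hm : Num.max (f2 x) (f3 x) <= f3 x by rewrite ge_max h lexx.
      nra.
    + have hm : Num.max (f2 x) (f3 x) <= f2 x by rewrite ge_max lexx (ltW h).
      nra.
by exists x; move: h23; rewrite ge_max => /andP [? ?]; split.
Qed.
End Minimax.

Lemma fan (R : realType) (H : Type) (d : H -> H -> R) : CAT0 d ->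
  forall (a1 a2 a3 : H) (l1 l2 l3 : R), 0 <= l1 -> 0 <= l2 -> 0 <= l3 ->
  l1 + l2 + l3 = 1 ->
  exists x, l1 * d a1 x ^+ 2 + l2 * d a2 x ^+ 2 + l3 * d a3 x ^+ 2 <=
     l1 * l2 * d a1 a2 ^+ 2 + l1 * l3 * d a1 a3 ^+ 2 + l2 * l3 * d a2 a3 ^+ 2.
Proof.
move=> [[[d0 [dE [dS _]]] geo] cat] a1 a2 a3 l1 l2 l3 hl1 hl2 hl3 hsum.
have dxx : forall x, d x x = 0 by move=> x; apply/dE.
have [hs|hs] := eqVneq (l2 + l3) 0.
  have e2 : l2 = 0 by lra.
  have e3 : l3 = 0 by lra.
  by exists a1; rewrite e2 e3 dxx; lra.
pose s := l2 + l3.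
have s0 : 0 < s by rewrite /s; rewrite lt_neqAle eq_sym hs /=; lra.
pose t := l3 / s.
have e3 : l3 = t * s by rewrite /t mulfVK.
have e2 : l2 = s * (1 - t) by rewrite mulrBr mulr1 [s * t]mulrC -e3 /s; lra.
have e1 : l1 = 1 - s by rewrite /s; lra.
have ht : 0 <= t <= 1.
  apply/andP; split; first by apply: divr_ge0; lra.
  by rewrite /t ler_pdivrMr // mul1r /s; lra.
have hs01 : 0 <= s <= 1 by apply/andP; split; rewrite /s; lra.
have [g [gg [g0 g1]]] := geo a2 a3.
have [h [hg [h0 h1]]] := geo a1 (g t).
exists (h s).
have I1 := cat a1 h hg s hs01; rewrite h0 h1 dxx in I1.
have I2 := cat a2 h hg s hs01; rewrite h0 h1 (dS a2 a1) in I2.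
have I3 := cat a3 h hg s hs01; rewrite h0 h1 (dS a3 a1) in I3.
have J2 := cat a2 g gg t ht; rewrite g0 g1 dxx in J2.
have J3 := cat a3 g gg t ht; rewrite g0 g1 dxx (dS a3 a2) in J3.
move: I1 I2 I3 J2 J3.
set D1 := d a1 (h s) ^+ 2; set D2 := d a2 (h s) ^+ 2; set D3 := d a3 (h s) ^+ 2.
set P2 := d a2 (g t) ^+ 2; set P3 := d a3 (g t) ^+ 2; set dl := d a1 (g t) ^+ 2.
set L := d a2 a3 ^+ 2; set d12 := d a1 a2 ^+ 2; set d13 := d a1 a3 ^+ 2.
move=> I1 I2 I3 J2 J3.
have K1 := ler_wpM2l hl1 I1.
have K2 := ler_wpM2l hl2 I2.
have K3 := ler_wpM2l hl3 I3.
have hl2s : 0 <= l2 * s by nra.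
have hl3s : 0 <= l3 * s by nra.
have K4 := ler_wpM2l hl2s J2.
have K5 := ler_wpM2l hl3s J3.
rewrite e1 e2 e3 in K1 K2 K3 K4 K5 *.
lra.
Qed.

Lemma eucl_sq (R : realType) (x y : R * R) :
  eucl x y ^+ 2 = (x.1 - y.1) ^+ 2 + (x.2 - y.2) ^+ 2.
Proof. by rewrite /eucl sqr_sqrtr // addr_ge0 // sqr_ge0. Qed.

Lemma eucl_ge0 (R : realType) (x y : R * R) : 0 <= eucl x y.
Proof. exact: sqrtr_ge0. Qed.

Lemma euclid_bary (R : realType) (b1 b2 b3 p : R * R) (l1 l2 l3 : R) :
  l1 + l2 + l3 = 1 ->
  l1 * l2 * eucl b1 b2 ^+ 2 + l1 * l3 * eucl b1 b3 ^+ 2 + l2 * l3 * eucl b2 b3 ^+ 2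
  <= l1 * eucl p b1 ^+ 2 + l2 * eucl p b2 ^+ 2 + l3 * eucl p b3 ^+ 2.
Proof.
move=> hs; rewrite !eucl_sq.
have sq1 := sqr_ge0 (p.1 - (l1 * b1.1 + l2 * b2.1 + l3 * b3.1)).
have sq2 := sqr_ge0 (p.2 - (l1 * b1.2 + l2 * b2.2 + l3 * b3.2)).
have e1 : l1 = 1 - l2 - l3 by lra.
rewrite e1 in sq1 sq2 *.
lra.
Qed.

Theorem mainTheorem1 (R : realType) (H : Type) (d : H -> H -> R) :
  Hadamard d -> curv_nonpos d.
Proof.
move=> [cat _] a1 a2 a3 b1 b2 b3 e12 e13 e23.
have cat' := cat.
move: cat' => [[[d0 [dE [dS _]]] geo] catI].
rewrite /circumradius2 /circumradius.
apply: lb_le_inf.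
  by exists (max3 (eucl b1 b1) (eucl b1 b2) (eucl b1 b3)); exists b1.
move=> m [p _ <-].
set M := max3 (eucl p b1) (eucl p b2) (eucl p b3).
have hM1 : eucl p b1 <= M by rewrite /M /max3 le_max lexx.
have hM2 : eucl p b2 <= M by rewrite /M /max3 !le_max lexx orbT.
have hM3 : eucl p b3 <= M by rewrite /M /max3 !le_max lexx !orbT.
have g1 := eucl_ge0 p b1; have g2 := eucl_ge0 p b2; have g3 := eucl_ge0 p b3.
have M0 : 0 <= M by lra.
apply/ler_addgt0Pr => eta he.
have [x [h1 h2 h3]] : exists x, [/\ d a1 x ^+ 2 <= (M + eta) ^+ 2,
    d a2 x ^+ 2 <= (M + eta) ^+ 2 & d a3 x ^+ 2 <= (M + eta) ^+ 2].
  apply: (@claim3 R H (fun x => d a1 x ^+ 2) (fun x => d a2 x ^+ 2)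
    (fun x => d a3 x ^+ 2) (M ^+ 2 + eta ^+ 2 / 2) ((M + eta) ^+ 2)).
  + have : 0 < eta ^+ 2 / 2 by apply: divr_gt0 => //; nra.
    nra.
  + move=> x y t ht; have [g [gg [g0 g1']]] := geo x y.
  exists (g t).
  have A1 := catI a1 g gg t ht; have A2 := catI a2 g gg t ht;
  have A3 := catI a3 g gg t ht.
  rewrite g0 g1' in A1 A2 A3.
  have hp : 0 <= t * (1 - t) * d x y ^+ 2.
    by apply: mulr_ge0; [nra | exact: sqr_ge0].
  split; lra.
  + move=> l1 l2 l3 hl1 hl2 hl3 hs.
  have [x hx] := fan cat a1 a2 a3 hl1 hl2 hl3 hs.
  exists x; apply: (le_lt_trans hx).
  rewrite -e12 -e13 -e23.
  apply: (le_lt_trans (euclid_bary b1 b2 b3 p hs)).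
  have q1 : eucl p b1 ^+ 2 <= M ^+ 2 by nra.
  have q2 : eucl p b2 ^+ 2 <= M ^+ 2 by nra.
  have q3 : eucl p b3 ^+ 2 <= M ^+ 2 by nra.
  have : 0 < eta ^+ 2 / 2 by apply: divr_gt0 => //; nra.
  nra.
have k1 : d x a1 <= M + eta by rewrite dS; have := d0 a1 x; nra.
have k2 : d x a2 <= M + eta by rewrite dS; have := d0 a2 x; nra.
have k3 : d x a3 <= M + eta by rewrite dS; have := d0 a3 x; nra.
apply: le_trans (_ : max3 (d x a1) (d x a2) (d x a3) <= _); last first.
  by rewrite /max3 !ge_max k1 k2 k3.
apply: ge_inf; last by exists x.
exists 0 => y [z _ <-].
by rewrite /max3 !le_max d0.
Qed.
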